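(* Let $d\geq 2$ and consider a $d$-level system with energies $E_1\leq E_2\leq\dots\leq E_d$. Fix inverse temperatures $\alpha>\beta\geq 0$ and let $\boldsymbol{\gamma}$, $\boldsymbol{\Gamma}$ be the corresponding Gibbs distributions, $\gamma_k=e^{-\alpha E_k}/\sum_{i=1}^d e^{-\alpha E_i}$ and $\Gamma_k=e^{-\beta E_k}/\sum_{i=1}^d e^{-\beta E_i}$. Let $\mathbf{p}$ be a $d$-dimensional probability vector and let $\mathbf{q}$ be any probability vector achievable from $\mathbf{p}$ by the fused operations $\mathcal{F}_{AB}$ (as defined in the context). Then $$q_d\leq M(\mathbf{p}):=\max\left\{p_d,\frac{\Gamma_d}{\Gamma_{d-1}}\right\}.$$ In particular, $M$ is a monotone of the resulting resource theory, i.e., $M(\mathbf{q})\leq M(\mathbf{p})$ whenever $\mathbf{q}$ is achievable from $\mathbf{p}$ via $\mathcal{F}_{AB}$.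
   Context: Incoherent states of the $d$-level system are represented by probability vectors $\mathbf{p}=(p_1,\dots,p_d)$ (occupations of the energy levels). Thermomajorisation relative to a full-support probability vector $\mathbf{g}$: let $\pi$ be a permutation of $\{1,\dots,d\}$ such that $p_{\pi_i}/g_{\pi_i}\geq p_{\pi_{i+1}}/g_{\pi_{i+1}}$ for all $i$; the thermomajorisation curve of $\mathbf{p}$ relative to $\mathbf{g}$ is the piecewise linear curve connecting the points $\left(\sum_{i=1}^j g_{\pi_i},\sum_{i=1}^j p_{\pi_i}\right)$, $j=0,\dots,d$ (with $j=0$ giving $(0,0)$). We write $\mathbf{p}\succ_{\mathbf{g}}\mathbf{q}$ if the curve of $\mathbf{p}$ is nowhere below that of $\mathbf{q}$; this characterises the existence of a thermal operation (at the temperature corresponding to $\mathbf{g}$) mapping $\mathbf{p}$ to $\mathbf{q}$. A state $\mathbf{q}$ is achievable from $\mathbf{p}$ via $\mathcal{F}_{AB}$ if it is a convex combination of vectors $\mathbf{r}$ for which there is a finite chain $\mathbf{p}=\mathbf{r}^{(0)}\succ_{\mathbf{g}_1}\mathbf{r}^{(1)}\succ_{\mathbf{g}_2}\dots\succ_{\mathbf{g}_n}\mathbf{r}^{(n)}=\mathbf{r}$ with each $\mathbf{g}_i\in\{\boldsymbol{\gamma},\boldsymbol{\Gamma}\}$ (i.e., alternately applying thermal operations with respect to the two temperatures). *)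

(* Defs.v *)
From HB Require Import structures.
From mathcomp Require Import all_boot all_order all_algebra all_fingroup.
From mathcomp Require Import all_classical all_reals all_analysis.
Set Implicit Arguments. Unset Strict Implicit. Unset Printing Implicit Defensive.
Import Order.TTheory GRing.Theory Num.Theory.
Local Open Scope ring_scope.

(* Vectors of a d-level system are functions nat -> R; only indices 0..d-1
   matter (index k corresponds to the paper's level k+1). *)

Definition prob_vec (R : realType) (d : nat) (p : nat -> R) : Prop :=
  (forall i, (i < d)%N -> 0 <= p i) /\ \sum_(i < d) p i = 1.

Definition gibbs (R : realType) (d : nat) (E : nat -> R) (b : R) : nat -> R :=
  fun k => expR (- (b * E k)) / \sum_(i < d) expR (- (b * E i)).

Definition sorting_perm (R : realType) (d : nat) (p g : nat -> R) (s : 'S_d) : Prop :=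
  forall i j : 'I_d, nat_of_ord j = (nat_of_ord i).+1 ->
    p (s j) / g (s j) <= p (s i) / g (s i).

(* Value at abscissa x of the piecewise-linear curve joining the points
   (sum_{i<=j} g_{s i}, sum_{i<=j} p_{s i}), j = 0..d (with (0,0) first).
   The i-th segment has horizontal extent g_{s i} > 0 and slope
   p_{s i}/g_{s i}; the clamped sum below is exactly this interpolation. *)
Definition tcurve (R : realType) (d : nat) (p g : nat -> R) (s : 'S_d) (x : R) : R :=
  \sum_(i < d) p (s i) *
     Num.min 1 (Num.max 0
       ((x - \sum_(j < d | (nat_of_ord j < nat_of_ord i)%N) g (s j)) / g (s i))).

Definition thermo_maj (R : realType) (d : nat) (g p q : nat -> R) : Prop :=
  prob_vec d p /\ prob_vec d q /\
  exists (s t : 'S_d), sorting_perm p g s /\ sorting_perm q g t /\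
    forall x : R, 0 <= x <= 1 -> tcurve q g t x <= tcurve p g s x.

Inductive chain_reach (R : realType) (d : nat) (gam Gam p : nat -> R) : (nat -> R) -> Prop :=
  | reach_refl : chain_reach d gam Gam p p
  | reach_step_gam : forall r r', chain_reach d gam Gam p r ->
      thermo_maj d gam r r' -> chain_reach d gam Gam p r'
  | reach_step_Gam : forall r r', chain_reach d gam Gam p r ->
      thermo_maj d Gam r r' -> chain_reach d gam Gam p r'.

(* q achievable via F_AB: a convex combination of chain-reachable vectors. *)
Definition achievable (R : realType) (d : nat) (gam Gam p q : nat -> R) : Prop :=
  exists (n : nat) (w : 'I_n -> R) (r : 'I_n -> nat -> R),
    (forall k, 0 <= w k) /\ \sum_(k < n) w k = 1 /\
    (forall k, chain_reach d gam Gam p (r k)) /\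
    forall i, (i < d)%N -> q i = \sum_(k < n) w k * r k i.

(* M(p) = max{ p_d, Gamma_d / Gamma_{d-1} } (0-based: indices d-1, d-2). *)
Definition Mmono (R : realType) (d : nat) (Gam p : nat -> R) : R :=
  Num.max (p d.-1) (Gam d.-1 / Gam d.-2).

(* Main.v *)
Require Import Defs.
From HB Require Import structures.
From mathcomp Require Import all_boot all_order all_algebra all_fingroup.
From mathcomp Require Import all_classical all_reals all_analysis.
From mathcomp Require Import ring lra.
Import Order.TTheory GRing.Theory Num.Theory.
Local Open Scope ring_scope.

Lemma prob_le1 (R : realType) d (r : nat -> R) k :
  prob_vec d r -> (k < d)%N -> r k <= 1.
Proof.
move=> [r0 <-] kd.
rewrite (bigD1 (Ordinal kd)) //= lerDl sumr_ge0 // => i _; exact: r0.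
Qed.

Lemma tcurve_small (R : realType) n (r g : nat -> R) (s : 'S_(n.+2)) x :
  (forall k, (k < n.+2)%N -> 0 < g k) -> 0 <= x ->
  (forall k, (k < n.+2)%N -> x <= g k) ->
  tcurve r g s x = r (s ord0) * (x / g (s ord0)).
Proof.
move=> gp x0 xg.
rewrite /tcurve (bigD1 ord0) //=.
rewrite [X in _ + X]big1 ?addr0.
  rewrite big1 ?subr0; last by move=> j; rewrite /= ltn0.
  have g0 := gp _ (ltn_ord (s ord0)).
  rewrite max_r ?min_r //; first by rewrite ler_pdivrMr // mul1r xg.
  by rewrite divr_ge0 // ltW.
move=> i ni0.
have gi := gp _ (ltn_ord (s i)).
rewrite max_l ?min_r ?mulr0 //.
rewrite pmulr_lle0 ?invr_gt0 // subr_le0.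
apply: (le_trans (xg _ (ltn_ord (s ord0)))).
have i0 : (nat_of_ord (@ord0 n.+1) < i)%N by rewrite lt0n.
rewrite (bigD1 ord0) //= lerDl sumr_ge0 // => j _; exact: ltW (gp _ (ltn_ord _)).
Qed.

Lemma sorted_first (R : realType) n (r g : nat -> R) (t : 'S_(n.+2)) :
  sorting_perm r g t -> forall i : 'I_n.+2,
  r (t i) / g (t i) <= r (t ord0) / g (t ord0).
Proof.
move=> st.
suff H : forall m (h : (m < n.+2)%N), r (t (Ordinal h)) / g (t (Ordinal h)) <= r (t ord0) / g (t ord0).
  by case=> m h; apply: H.
elim=> [|m IH] h.
  by have -> : Ordinal h = ord0 by apply: val_inj.
have hm : (m < n.+2)%N by apply: ltnW.
apply: le_trans (IH hm).
by apply: (st (Ordinal hm) (Ordinal h)).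
Qed.

Lemma step_abs (R : realType) n (g r r' : nat -> R) :
  (forall k, (k < n.+2)%N -> 0 < g k) ->
  (forall k, (k < n.+2)%N -> g n.+1 <= g k) ->
  (forall k, (k <= n)%N -> g n <= g k) ->
  g n.+1 <= 1 ->
  thermo_maj (n.+2) g r r' -> r' n.+1 <= Num.max (r n.+1) (g n.+1 / g n).
Proof.
move=> gp gmin gmid g1 [pr [pr' [s [t [ss [st H]]]]]].
have x0 : 0 <= g n.+1 by apply: ltW; apply: gp.
have := H (g n.+1); rewrite x0 g1 => /(_ isT).
rewrite !tcurve_small // => Hc.
have gD := gp _ (ltnSn n.+1).
have gt0 := gp _ (ltn_ord (t ord0)).
have gs0 := gp _ (ltn_ord (s ord0)).
have L : r' n.+1 <= r' (t ord0) * (g n.+1 / g (t ord0)).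
  have := @sorted_first _ _ _ _ _ st ((t^-1)%g ord_max); rewrite permKV /= => Hs.
  rewrite mulrA mulrAC -[r' n.+1](divfK (lt0r_neq0 gD)).
  by rewrite ler_wpM2r.
apply: (le_trans L); apply: (le_trans Hc).
case: (eqVneq (s ord0) ord_max) => [-> | ne].
  by rewrite /= divff ?mulr1 ?le_max ?lexx // lt0r_neq0.
rewrite le_max; apply/orP; right.
have sn : (s ord0 <= n)%N.
  have := ltn_ord (s ord0); rewrite ltnS leq_eqVlt => /orP [/eqP e|//].
  by case/eqP: ne; apply: val_inj.
have gn := gp n (leqnSn n.+1).
rewrite -[X in _ <= X]mul1r; apply: ler_pM.
- by case: pr => + _; apply.
- by rewrite divr_ge0 // ltW.
- exact: (@prob_le1 _ _ _ _ pr (ltn_ord _)).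
rewrite ler_wpM2l // lef_pV2 ?posrE //; exact: gmid.
Qed.

Section G.
Variables (R : realType) (n : nat) (E : nat -> R) (a : R).
Hypothesis a0 : 0 <= a.
Hypothesis Emon : forall i j, (i <= j)%N -> (j < n.+2)%N -> E i <= E j.

Let S := \sum_(i < n.+2) expR (- (a * E i)).

Lemma S_ge k : (k < n.+2)%N -> expR (- (a * E k)) <= S.
Proof.
move=> kd; rewrite /S (bigD1 (Ordinal kd)) //= lerDl sumr_ge0 // => i _.
Qed.

Lemma S_gt0 : 0 < S.
Proof. exact: (lt_le_trans (expR_gt0 _) (@S_ge 0%N isT)). Qed.

Lemma gibbs_pos k : 0 < gibbs (n.+2) E a k.
Proof. by rewrite /gibbs divr_gt0 // ?expR_gt0 // S_gt0. Qed.

Lemma gibbs_le1 k : (k < n.+2)%N -> gibbs (n.+2) E a k <= 1.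
Proof. by move=> kd; rewrite /gibbs ler_pdivrMr ?S_gt0 // mul1r S_ge. Qed.

Lemma gibbs_anti i j : (i <= j)%N -> (j < n.+2)%N ->
  gibbs (n.+2) E a j <= gibbs (n.+2) E a i.
Proof.
move=> ij jd; rewrite /gibbs ler_wpM2r ?invr_ge0 ?(ltW S_gt0) // ler_expR lerN2.
by rewrite ler_wpM2l // Emon.
Qed.

Lemma gibbs_ratio : gibbs (n.+2) E a n.+1 / gibbs (n.+2) E a n =
  expR (a * (E n - E n.+1)).
Proof.
rewrite /gibbs.
have S0 : S != 0 by rewrite lt0r_neq0 // S_gt0.
have e0 : expR (- (a * E n)) != 0 by rewrite lt0r_neq0 // expR_gt0.
have -> : expR (a * (E n - E n.+1)) = expR (- (a * E n.+1)) / expR (- (a * E n)).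
  by rewrite -expRB; congr expR; ring.
rewrite -/S; field; by rewrite S0 e0.
Qed.

End G.

Lemma ratio_mono (R : realType) n (E : nat -> R) a b :
  (forall i j, (i <= j)%N -> (j < n.+2)%N -> E i <= E j) -> b <= a ->
  gibbs (n.+2) E a n.+1 / gibbs (n.+2) E a n <= gibbs (n.+2) E b n.+1 / gibbs (n.+2) E b n.
Proof.
move=> Emon ba; rewrite !gibbs_ratio ler_expR.
have := Emon n n.+1 (leqnSn n) (ltnSn _); nra.
Qed.

Lemma step_gibbs (R : realType) n (E : nat -> R) a (r r' : nat -> R) :
  0 <= a -> (forall i j, (i <= j)%N -> (j < n.+2)%N -> E i <= E j) ->
  thermo_maj (n.+2) (gibbs (n.+2) E a) r r' ->
  r' n.+1 <= Num.max (r n.+1) (gibbs (n.+2) E a n.+1 / gibbs (n.+2) E a n).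
Proof.
move=> a0 Emon; apply: step_abs.
- by move=> k _; apply: gibbs_pos.
- by move=> k kd; apply: gibbs_anti => //; rewrite -ltnS.
- by move=> k kn; apply: gibbs_anti => //; apply: ltnW.
- exact: gibbs_le1.
Qed.

Lemma chain_bd (R : realType) n (E : nat -> R) alpha beta (p r : nat -> R) :
  (forall i j, (i <= j)%N -> (j < n.+2)%N -> E i <= E j) ->
  0 <= beta -> beta < alpha ->
  chain_reach (n.+2) (gibbs (n.+2) E alpha) (gibbs (n.+2) E beta) p r ->
  r n.+1 <= Mmono (n.+2) (gibbs (n.+2) E beta) p.
Proof.
move=> Emon b0 ba; rewrite /Mmono /=.
set C := gibbs _ _ beta _ / _.
have hC : C <= Num.max (p n.+1) C by rewrite le_max lexx orbT.
elim=> [|r1 r2 _ IH T|r1 r2 _ IH T].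
- by rewrite le_max lexx.
- apply: le_trans (@step_gibbs _ _ _ _ _ _ (ltW (le_lt_trans b0 ba)) Emon T) _.
  rewrite ge_max IH /=; apply: le_trans hC.
  exact: (@ratio_mono _ _ _ _ _ Emon (ltW ba)).
- apply: le_trans (@step_gibbs _ _ _ _ _ _ b0 Emon T) _.
  by rewrite ge_max IH.
Qed.

Theorem theorem1 (R : realType) (d : nat) (E : nat -> R) (alpha beta : R)
    (p q : nat -> R) :
  (2 <= d)%N ->
  (forall i j, (i <= j)%N -> (j < d)%N -> E i <= E j) ->
  0 <= beta -> beta < alpha ->
  prob_vec d p -> prob_vec d q ->
  achievable d (gibbs d E alpha) (gibbs d E beta) p q ->
  q d.-1 <= Mmono d (gibbs d E beta) p /\
  Mmono d (gibbs d E beta) q <= Mmono d (gibbs d E beta) p.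
Proof.
case: d => [|[|n]] // _ Emon b0 ba pp pq [m [w [r [w0 [w1 [rc qe]]]]]].
have Hq : q n.+1 <= Mmono n.+2 (gibbs n.+2 E beta) p.
  rewrite qe // -[X in _ <= X]mul1r -w1 mulr_suml.
  apply: ler_sum => k _; apply: ler_wpM2l => //.
  exact: (@chain_bd _ _ _ _ _ _ _ Emon b0 ba (rc k)).
split => //.
rewrite {1}/Mmono /= ge_max Hq /= /Mmono le_max lexx orbT //.
Qed.
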